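(* Let $b\ge 2$ be an integer. Every natural number that is antipalindromic in base $b$ and whose base-$b$ expansion has an even number of digits is divisible by $b-1$.
   Context: For an integer $b\ge 2$, every natural number $m$ has a unique base-$b$ expansion $m=a_nb^n+\dots+a_1b+a_0$ with $a_0,\dots,a_n\in\{0,1,\dots,b-1\}$ and $a_n\neq 0$ (it has $n+1$ digits). The number $m$ is antipalindromic in base $b$ if $a_j=b-1-a_{n-j}$ for all $j\in\{0,1,\dots,n\}$. *)

(* Defs.v *)
From mathcomp Require Import all_boot.
Set Implicit Arguments. Unset Strict Implicit. Unset Printing Implicit Defensive.

(* Base-b digits of m, least significant first: [:: a_0; a_1; ...; a_n],
   with a_n <> 0 when m > 0; digits b 0 = [::]. Fuel = m suffices for b >= 2. *)
Fixpoint digits_fuel (fuel b m : nat) : seq nat :=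
  match fuel with
  | 0 => [::]
  | fuel'.+1 => if m == 0 then [::] else (m %% b) :: digits_fuel fuel' b (m %/ b)
  end.

Definition digits (b m : nat) : seq nat := digits_fuel m b m.

Definition antipalindromic (b m : nat) : Prop :=
  let s := digits b m in
  forall j, j < size s -> nth 0 s j = b - 1 - nth 0 s ((size s).-1 - j).

Example digits_test : digits 10 1203 = [:: 3; 0; 2; 1]. Proof. by []. Qed.

(* Main.v *)
Require Import Defs.
From mathcomp Require Import all_boot.
From mathcomp Require Import zify.

Lemma digits_fuel_lt f b m : 0 < b -> all (fun d => d < b) (digits_fuel f b m).
Proof.
move=> b0; elim: f m => [|f IH] m //=.
case: (m == 0) => //=; rewrite ltn_mod b0 /=; exact: IH.
Qed.

Definition val_of b (s : seq nat) := foldr (fun d acc => d + b * acc) 0 s.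

Lemma digits_fuel_val f b m : 2 <= b -> m <= f -> val_of b (digits_fuel f b m) = m.
Proof.
move=> b2; elim: f m => [|f IH] m /=; first by rewrite leqn0 => /eqP->.
move=> hm; case: eqP => [->//|/eqP m0] /=.
rewrite IH; last first.
  have: m %/ b < m by rewrite ltn_Pdiv // lt0n.
  lia.
by rewrite mulnC addnC -divn_eq.
Qed.

Lemma val_mod b s : 0 < b -> val_of b s = sumn s %[mod b - 1].
Proof.
case: b => [//|b] _; elim: s => [|d s IH] //=.
rewrite subn1 /= -modnDmr -[in RHS]modnDmr; congr (_ %% _).
rewrite subn1 /= in IH.
by rewrite mulSn [_ + b * _]addnC [b * _]mulnC modnMDl IH.
Qed.

Theorem mainTheorem3 (b m : nat) :
  2 <= b -> antipalindromic b m -> ~~ odd (size (digits b m)) -> (b - 1) %| m.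
Proof.
move=> b2 anti ev.
set s := digits b m in anti ev.
have hall : all (fun d => d < b) s by apply: digits_fuel_lt; lia.
have hval : val_of b s = m by apply: digits_fuel_val.
set n := size s in ev anti.
have Hsum : (sumn s).*2 = n * (b - 1).
  rewrite -addnn {1}sumnE (big_nth 0) big_mkord.
  rewrite sumnE (big_nth 0) -/n big_nat_rev /= big_mkord -big_split /=.
  rewrite -[n in RHS]card_ord -sum_nat_const.
  apply: eq_bigr => i _.
  have hi := ltn_ord i.
  have -> : 0 + n - i.+1 = n.-1 - i by lia.
  have hlt : nth 0 s (n.-1 - i) < b.
    apply: (allP hall); apply: mem_nth; rewrite -/n; lia.
  rewrite (anti i hi) -/s; have E : (size s).-1 = n.-1 by []; rewrite E; lia.
have : (b - 1) %| sumn s.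
  move/negbTE: ev => ev.
  have hn : n = (n./2).*2 by rewrite -[n in LHS]odd_double_half ev.
  rewrite hn -!mul2n -mulnA in Hsum.
  move/eqP: Hsum; rewrite eqn_mul2l /= => /eqP ->.
  exact: dvdn_mull.
rewrite /dvdn -val_mod ?hval //; lia.
Qed.
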